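(* Let $R$ be a ring and let $A=\sigma(R)\langle x_1,\dots,x_n\rangle$ be a skew PBW extension of $R$, with associated families $\Sigma=\{\sigma_1,\dots,\sigma_n\}$ and $\Delta=\{\delta_1,\dots,\delta_n\}$. If $R$ is a Baer ring, $R$ is $(\Sigma,\Delta)$-compatible, and $R$ satisfies condition (SA1), then $A$ has Property $(a.c.)$ on the right.
   Context: All rings are associative with identity. For $S\subseteq T$ (a ring $T$), $r_T(S)=\{a\in T: Sa=0\}$ and $\ell_T(S)=\{a\in T: aS=0\}$. A ring $A$ is a skew PBW extension of $R$, written $A=\sigma(R)\langle x_1,\dots,x_n\rangle$, if: (i) $R$ is a subring of $A$ with the same identity; (ii) there are elements $x_1,\dots,x_n\in A$ such that $A$ is a free left $R$-module with basis the standard monomials $x^\alpha=x_1^{\alpha_1}\cdots x_n^{\alpha_n}$, $\alpha\in\mathbb N^n$ (with $x^0=1$); (iii) for each $i$ and each nonzero $r\in R$ there is nonzero $c_{i,r}\in R$ with $x_ir-c_{i,r}x_i\in R$; (iv) for all $i,j$ there is nonzero $d_{i,j}\in R$ with $x_jx_i-d_{i,j}x_ix_j\in R+Rx_1+\cdots+Rx_n$. For such $A$ there are injective endomorphisms $\sigma_i$ of $R$ and $\sigma_i$-derivations $\delta_i$ of $R$ with $x_ir=\sigma_i(r)x_i+\delta_i(r)$ for all $r\in R$; $\Sigma=\{\sigma_1,\dots,\sigma_n\}$, $\Delta=\{\delta_1,\dots,\delta_n\}$. For $\alpha\in\mathbb N^n$, $\sigma^\alpha=\sigma_1^{\alpha_1}\circ\cdots\circ\sigma_n^{\alpha_n}$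 and $\delta^\alpha=\delta_1^{\alpha_1}\circ\cdots\circ\delta_n^{\alpha_n}$. $R$ is $\Sigma$-compatible if for all $a,b\in R$ and $\alpha\in\mathbb N^n$: $a\sigma^\alpha(b)=0$ iff $ab=0$; $R$ is $\Delta$-compatible if for all $a,b\in R$ and $\beta\in\mathbb N^n$: $ab=0$ implies $a\delta^\beta(b)=0$; $(\Sigma,\Delta)$-compatible means both. $R$ satisfies condition (SA1) if whenever $fg=0$ for $f=a_0+a_1X_1+\cdots+a_mX_m$ and $g=b_0+b_1Y_1+\cdots+b_tY_t$ in $A$ (with $a_i,b_j\in R$ and $X_i,Y_j$ standard monomials), then $a_ib_j=0$ for all $i,j$. $R$ is a Baer ring if for every nonempty subset $X\subseteq R$ there is an idempotent $e$ with $r_R(X)=eR$. A ring $T$ has Property $(a.c.)$ on the right if for every finitely generated right ideal $I$ of $T$ there is $c\in T$ with $r_T(I)=r_T(cT)$; on the left if for every finitely generated left ideal $I$ there is $c\in T$ with $\ell_T(I)=\ell_T(Tc)$. *)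

(* Defs.v *)
From HB Require Import structures.
From mathcomp Require Import all_boot all_algebra.
Set Implicit Arguments. Unset Strict Implicit. Unset Printing Implicit Defensive.
Import GRing.Theory.
Local Open Scope ring_scope.

Notation expo n := {ffun 'I_n -> nat}.

Definition monom (A : pzRingType) (n : nat) (x : 'I_n -> A) (alpha : expo n) : A :=
  \prod_(i < n) x i ^+ alpha i.

Definition lincomb (R A : pzRingType) (iota : R -> A) (n : nat) (x : 'I_n -> A)
  (s : seq (expo n)) (c : expo n -> R) : A :=
  \sum_(alpha <- s) iota (c alpha) * monom x alpha.

Definition skewPBW (R A : pzRingType) (iota : {rmorphism R -> A}) (n : nat)
  (x : 'I_n -> A) : Prop :=
  [/\ injective iota,
      (* (ii) A is a free left R-module with basis the standard monomials *)
      (forall a : A, exists (s : seq (expo n)) (c : expo n -> R), a = lincomb iota x s c),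
      (forall (s : seq (expo n)) (c : expo n -> R), uniq s ->
          lincomb iota x s c = 0 -> forall alpha, alpha \in s -> c alpha = 0),
      (forall (i : 'I_n) (r : R), r != 0 ->
          exists c : R, c != 0 /\ exists r' : R, x i * iota r - iota c * x i = iota r') &
      (forall i j : 'I_n, exists d : R, d != 0 /\
          exists (r0 : R) (r : 'I_n -> R),
            x j * x i - iota d * x i * x j = iota r0 + \sum_(k < n) iota (r k) * x k)].

Definition ring_endo (R : pzRingType) (f : R -> R) : Prop :=
  [/\ forall a b, f (a + b) = f a + f b,
      forall a b, f (a * b) = f a * f b & f 1 = 1].

Definition sigma_derivation (R : pzRingType) (s d : R -> R) : Prop :=
  (forall a b, d (a + b) = d a + d b) /\
  (forall a b, d (a * b) = s a * d b + d a * b).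

Definition assoc_families (R A : pzRingType) (iota : {rmorphism R -> A}) (n : nat)
  (x : 'I_n -> A) (sigma delta : 'I_n -> R -> R) : Prop :=
  forall i : 'I_n,
    [/\ ring_endo (sigma i), injective (sigma i),
        sigma_derivation (sigma i) (delta i) &
        forall r : R, x i * iota r = iota (sigma i r) * x i + iota (delta i r)].

Definition fpow (R : Type) (n : nat) (f : 'I_n -> R -> R) (alpha : expo n) : R -> R :=
  foldr (fun i g => iter (alpha i) (f i) \o g) id (enum 'I_n).

Definition Sigma_compatible (R : pzRingType) (n : nat) (sigma : 'I_n -> R -> R) : Prop :=
  forall (a b : R) (alpha : expo n), a * fpow sigma alpha b = 0 <-> a * b = 0.

Definition Delta_compatible (R : pzRingType) (n : nat) (delta : 'I_n -> R -> R) : Prop :=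
  forall (a b : R) (beta : expo n), a * b = 0 -> a * fpow delta beta b = 0.

Definition SA1 (R A : pzRingType) (iota : {rmorphism R -> A}) (n : nat)
  (x : 'I_n -> A) : Prop :=
  forall (s t : seq (expo n)) (a b : expo n -> R), uniq s -> uniq t ->
    lincomb iota x s a * lincomb iota x t b = 0 ->
    forall alpha beta, alpha \in s -> beta \in t -> a alpha * b beta = 0.

Definition rann (T : pzRingType) (S : T -> Prop) : T -> Prop :=
  fun a => forall y, S y -> y * a = 0.
Definition lann (T : pzRingType) (S : T -> Prop) : T -> Prop :=
  fun a => forall y, S y -> a * y = 0.

Definition baer (R : pzRingType) : Prop :=
  forall X : R -> Prop, (exists x, X x) ->
    exists e : R, e * e = e /\ forall a, rann X a <-> exists r, a = e * r.

Definition rideal_gen (T : pzRingType) (s : seq T) : T -> Prop :=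
  fun y => exists t : 'I_(size s) -> T, y = \sum_(i < size s) s`_i * t i.

Definition rprincipal (T : pzRingType) (c : T) : T -> Prop :=
  fun y => exists t, y = c * t.

Definition right_ac (T : pzRingType) : Prop :=
  forall s : seq T, exists c : T, forall a, rann (rideal_gen s) a <-> rann (rprincipal c) a.

(* Main.v *)
Require Import Defs.
From HB Require Import structures.
From mathcomp Require Import all_boot all_algebra.
Local Open Scope ring_scope.
Import GRing.Theory.

Section Aux.
Set Implicit Arguments.
Variables (R A : pzRingType) (iota : {rmorphism R -> A}) (n : nat) (x : 'I_n -> A).

Lemma uniq_rep (s : seq (expo n)) (c : expo n -> R) :
  exists s' c', uniq s' /\ lincomb iota x s c = lincomb iota x s' c'.
Proof.
exists (undup s), (fun a => c a *+ count_mem a s); split; first exact: undup_uniq.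
rewrite /lincomb -big_undup_iterop_count; apply: eq_bigr => a _.
by rewrite Monoid.iteropE iter_addr_0 rmorphMn mulrnAl.
Qed.

Lemma fpow_unit (f : 'I_n -> R -> R) (i : 'I_n) b :
  fpow f [ffun j => nat_of_bool (j == i)] b = f i b.
Proof.
rewrite /fpow.
have H0 : forall r : seq 'I_n, i \notin r ->
   foldr (fun j g => iter ([ffun j => nat_of_bool (j == i)] j) (f j) \o g) id r b = b.
  elim=> [|j r IH] //=; rewrite inE negb_or => /andP[ne nr].
  by rewrite ffunE eq_sym (negbTE ne) /= IH.
have : uniq (enum 'I_n) by apply: enum_uniq.
have : i \in enum 'I_n by rewrite mem_enum.
elim: (enum 'I_n) => [|j r IH] //=; rewrite inE => /orP[/eqP<-|ir] /andP[nr ur].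
  by rewrite ffunE eqxx /= H0.
have ne : j != i by apply: contraNneq nr => ->.
by rewrite ffunE (negbTE ne) /= IH.
Qed.

End Aux.
Unset Implicit Arguments.

Theorem mainTheorem1 (R A : pzRingType) (iota : {rmorphism R -> A}) (n : nat)
  (x : 'I_n -> A) (sigma delta : 'I_n -> R -> R) :
  skewPBW iota x ->
  assoc_families iota x sigma delta ->
  baer R ->
  Sigma_compatible sigma ->
  Delta_compatible delta ->
  SA1 iota x ->
  right_ac A.
Proof.
move=> [_ Hspan _ _ _] Hfam Hbaer Hsig Hdel Hsa S.
pose Q (m : A) := forall a b, a * b = 0 -> iota a * m * iota b = 0.
have Q1 : Q 1 by move=> a b ab; rewrite mulr1 -rmorphM ab rmorph0.
have Qx : forall m i, Q m -> Q (m * x i).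
  move=> m i Qm a b ab; have [_ _ _ Hx] := Hfam i.
  rewrite !mulrA -[_ * x i * _]mulrA Hx mulrDr (mulrA (iota a * m)) (Qm a) ?mul0r ?add0r ?(Qm a) //.
    by have := Hdel a b [ffun j => nat_of_bool (j == i)] ab; rewrite fpow_unit.
  by have := proj2 (Hsig a b [ffun j => nat_of_bool (j == i)]) ab; rewrite fpow_unit.
have Qmon : forall al, Q (monom x al).
  move=> al; rewrite /monom.
  elim/last_ind: (index_enum _) => [|r j IH]; first by rewrite big_nil.
  rewrite big_rcons /=; move: (\big[_/_]_(_ <- r) _) IH => P IH.
  elim: (al j) => [|k IHk]; first by rewrite expr0 mulr1.
  by rewrite exprSr mulrA; apply: Qx.
have rep : forall a : A, exists s c, uniq s /\ a = lincomb iota x s c.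
  move=> a; have [s [c ->]] := Hspan a; have [s' [c' [u e]]] := uniq_rep iota x s c.
  by exists s', c'.
pose I := rideal_gen S.
have Imul : forall y t, I y -> I (y * t).
  move=> y t [u ->]; exists (fun i => u i * t); rewrite mulr_suml; apply: eq_bigr => i _.
  by rewrite mulrA.
pose C (r : R) := exists y s c al, [/\ I y, uniq s, y = lincomb iota x s c, al \in s & r = c al].
have [e [ee He]] : exists e : R, e * e = e /\ forall a, rann C a <-> exists r, a = e * r.
  apply: Hbaer; exists 0.
  exists 0, [:: [ffun => 0%N]], (fun _ => 0), [ffun => 0%N]; split => //.
  - by exists (fun _ => 0); rewrite big1 // => i _; rewrite mulr0.
  - by rewrite /lincomb big_cons big_nil rmorph0 mul0r addr0.
  - by rewrite inE.
have Ce : rann C e by apply/He; exists 1; rewrite mulr1.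
have eb : forall b, rann C b -> e * b = b.
  by move=> b /He [r ->]; rewrite mulrA ee.
have Ie : forall y, I y -> y * iota e = 0.
  move=> y Iy; have [s [c [u ye]]] := rep y.
  rewrite ye /lincomb mulr_suml big1_seq // => al /andP[_ als].
  apply: Qmon; apply: Ce; by exists y, s, c, al.
exists (1 - iota e) => a; split.
- move=> Ha y [t ->]; rewrite -mulrA.
  have Hg : rann I (t * a) by move=> y' Iy'; rewrite mulrA; apply: Ha; apply: Imul.
  set g := t * a in Hg *.
  have [tb [b [ub ge]]] := rep g.
  suff H : iota e * g = g by rewrite mulrBl mul1r H subrr.
  rewrite ge /lincomb mulr_sumr; apply: eq_big_seq => be bet.
  rewrite mulrA -rmorphM eb //.
  move=> r [y0 [s [c [al [Iy0 us yr als ->]]]]].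
  apply: (Hsa s tb c b us ub) => //; rewrite -yr -ge; exact: Hg.
- move=> Ha y Iy.
  have h : (1 - iota e) * a = 0 by apply: Ha; exists 1; rewrite mulr1.
  have -> : a = iota e * a by move: h; rewrite mulrBl mul1r => /eqP; rewrite subr_eq0 => /eqP.
  by rewrite mulrA Ie // mul0r.
Qed.
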